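(* Let $d \ge 1$, let $\mathcal{V}^s$ be a finite nonempty set (the source vocabulary) with embeddings $e_k^s \in \mathbb{R}^d$ for $k \in \mathcal{V}^s$, and let $\mathcal{V}^t$ be a finite set disjoint from $\mathcal{V}^s$ (the added target vocabulary) with embeddings $e_k^t \in \mathbb{R}^d$ for $k \in \mathcal{V}^t$. Suppose that $$\sup_{k \in \mathcal{V}^t} h^{\top} e_k^t \;\le\; \sup_{k \in \mathcal{V}^s} h^{\top} e_k^s \qquad \text{for all } h \in \mathbb{R}^d.$$ Then $\{e_k^t : k \in \mathcal{V}^t\}$ is a good initialization, i.e. for every prefix representation $h \in H$, the greedily decoded next word of the expanded model equals that of the source model: $\operatorname{argmax}_{j \in \mathcal{V}^s} p^s(j \mid h) = \operatorname{argmax}_{j \in \mathcal{V}^s \cup \mathcal{V}^t} p^t(j \mid h)$.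
   Context: Setting: a language model maps a prefix (sequence of words) to a representation $h \in \mathbb{R}^d$ via a fixed map $\phi$ whose parameters are unchanged by vocabulary expansion. Let $H \subseteq \mathbb{R}^d$ be the set of representations $h = \phi(w_1,\dots,w_{i-1})$ of prefixes all of whose words lie in $\mathcal{V}^s$. The source model's next-word distribution is $p^s(j \mid h) = \exp(h^\top e_j^s)/\sum_{k \in \mathcal{V}^s}\exp(h^\top e_k^s)$ for $j \in \mathcal{V}^s$; the expanded model's is $p^t(j \mid h) = \exp(h^\top e_j)/\sum_{k \in \mathcal{V}^s \cup \mathcal{V}^t}\exp(h^\top e_k)$ for $j \in \mathcal{V}^s\cup\mathcal{V}^t$, where $e_j = e_j^s$ for $j \in \mathcal{V}^s$ and $e_j = e_j^t$ for $j \in \mathcal{V}^t$. Greedy decoding outputs the argmax. Tie-breaking convention: argmax uses a fixed ordering of $\mathcal{V}^s$ (the same in both models), and in the expanded model every word of $\mathcal{V}^s$ precedes every word of $\mathcal{V}^t$, ties being broken in favor of the earliest word. An initialization $\{e_k^t\}$ is called good if the two greedy outputs coincide for every $h \in H$. *)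

(* Defs.v *)
From HB Require Import structures.
From mathcomp Require Import all_boot all_order all_algebra.
From mathcomp Require Import all_classical all_reals all_analysis.
Set Implicit Arguments. Unset Strict Implicit. Unset Printing Implicit Defensive.
Import Order.TTheory GRing.Theory Num.Theory.
Local Open Scope ring_scope.

Section Defs.
Variables (R : realType) (d : nat).

Definition dotp (h e : 'rV[R]_d) : R := \sum_(i < d) h 0 i * e 0 i.

Definition softmax (V : finType) (e : V -> 'rV[R]_d) (h : 'rV[R]_d) (j : V) : R :=
  expR (dotp h (e j)) / \sum_(k : V) expR (dotp h (e k)).

Definition is_greedy (V : finType) (before : rel V) (f : V -> R) (j : V) : bool :=
  [forall k, (f k < f j) || ((f k == f j) && before j k)].

(* greedy decoding: the argmax of f, ties broken in favor of the earliest word *)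
Definition greedy (V : finType) (before : rel V) (f : V -> R) : option V :=
  [pick j | is_greedy before f j].
End Defs.

Definition rank_le (V : finType) (rk : V -> nat) : rel V := fun a b => (rk a <= rk b)%N.

(* expanded ordering: every source word precedes every added word *)
Definition sum_le (S T : finType) (rS : S -> nat) (rT : T -> nat) : rel (S + T) :=
  fun a b => match a, b with
  | inl x, inl y => (rS x <= rS y)%N
  | inl _, inr _ => true
  | inr _, inl _ => false
  | inr x, inr y => (rT x <= rT y)%N
  end.

Definition sum_emb (R : realType) (d : nat) (S T : finType)
  (es : S -> 'rV[R]_d) (et : T -> 'rV[R]_d) (k : S + T) : 'rV[R]_d :=
  match k with inl x => es x | inr y => et y end.

(* Main.v *)
Require Import Defs.
From HB Require Import structures.
From mathcomp Require Import all_boot all_order all_algebra.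
From mathcomp Require Import all_classical all_reals all_analysis.
Import Order.TTheory GRing.Theory Num.Theory.
Local Open Scope ring_scope.

Lemma softmax_greedyE (R : realType) (d : nat) (V : finType) (b : rel V)
  (e : V -> 'rV[R]_d) (h : 'rV[R]_d) (j : V) :
  is_greedy b (softmax e h) j = is_greedy b (fun k => dotp h (e k)) j.
Proof.
have Zgt0 : 0 < \sum_(k : V) expR (dotp h (e k)).
  rewrite (bigD1 j) //=; apply: ltr_wpDr; last exact: expR_gt0.
  by apply: sumr_ge0 => i _; apply: ltW; apply: expR_gt0.
have Zi : 0 < (\sum_(k : V) expR (dotp h (e k)))^-1 by rewrite invr_gt0.
apply: eq_forallb => k; rewrite /softmax.
rewrite ltr_pM2r // ltr_expR.
congr (_ || (_ && _)).
apply/eqP/eqP => [H|->] //.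
by apply: expR_inj; apply: (mulIf (lt0r_neq0 Zi)).
Qed.

Lemma greedy_uniq (R : realType) (V : finType) (b : rel V) (f : V -> R) j1 j2 :
  (forall x y, b x y -> b y x -> x = y) ->
  is_greedy b f j1 -> is_greedy b f j2 -> j1 = j2.
Proof.
move=> anti /forallP H1 /forallP H2.
move: (H1 j2) (H2 j1) => /orP[lt1|/andP[/eqP e1 b1]] /orP[lt2|/andP[/eqP e2 b2]].
- by move: (lt_trans lt1 lt2); rewrite ltxx.
- by move: lt1; rewrite e2 ltxx.
- by move: lt2; rewrite e1 ltxx.
- exact: anti.
Qed.

Lemma pick_uniq (V : finType) (P : pred V) j :
  P j -> (forall k, P k -> k = j) -> [pick x | P x] = Some j.
Proof.
move=> Pj U; case: pickP => [k Pk|/(_ j)]; first by rewrite (U k Pk).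
by rewrite Pj.
Qed.

Theorem theorem1 (R : realType) (d : nat) (S T : finType)
  (es : S -> 'rV[R]_d) (et : T -> 'rV[R]_d)
  (rS : S -> nat) (rT : T -> nat) (phi : seq S -> 'rV[R]_d) :
  (0 < d)%N -> (0 < #|S|)%N -> injective rS -> injective rT ->
  (forall h : 'rV[R]_d,
     (\big[Order.max/-oo%E]_(k : T) (dotp h (et k))%:E <=
      \big[Order.max/-oo%E]_(k : S) (dotp h (es k))%:E)%E) ->
  forall (prefix : seq S), let h := phi prefix in
  omap inl (greedy (rank_le rS) (softmax es h)) =
  greedy (sum_le rS rT) (softmax (sum_emb es et) h).
Proof.
move=> _ Sne irS irT Hmax prefix h.
have s0 : S.
  case: (pickP (fun _ : S => true)) => [x _|H]; first exact: x.
  by move: Sne; rewrite eq_card0.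
set f := fun k => dotp h (es k).
pose P := fun i => [forall k, f k <= f i].
have Pm : P [arg max_(i > s0) f i]%O.
  case: arg_maxP => // i _ Hi; apply/forallP => k; exact: Hi.
set j := [arg min_(i < [arg max_(i > s0) f i]%O | P i) rS i].
have [Pj jmin] : P j /\ forall i, P i -> (rS j <= rS i)%N.
  rewrite /j; case: arg_minnP => // i Pi Hi; split => //.
have gj : is_greedy (rank_le rS) f j.
  apply/forallP => k; move/forallP: (Pj) => /(_ k).
  rewrite le_eqVlt => /orP[/eqP ek|->]; last by [].
  apply/orP; right; rewrite ek eqxx /=; apply: jmin.
  rewrite /P; apply/forallP => k'; rewrite ek; by move/forallP: Pj.
have antiS : forall x y, rank_le rS x y -> rank_le rS y x -> x = y.
  by move=> x y; rewrite /rank_le => a b; apply: irS; apply/eqP; rewrite eqn_leq a b.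
have antiST : forall x y, sum_le rS rT x y -> sum_le rS rT y x -> x = y.
  case=> x [] y //= a b.
  - by rewrite (irS x y) //; apply/eqP; rewrite eqn_leq a b.
  - by rewrite (irT x y) //; apply/eqP; rewrite eqn_leq a b.
have maxS : forall k, dotp h (es k) <= f j by move=> k; move: Pj; rewrite /P => /forallP; apply.
have maxT : forall k, dotp h (et k) <= f j.
  move=> k; have := Hmax h; move=> HM.
  have le1 : ((dotp h (et k))%:E <= \big[Order.max/-oo%E]_(k : T) (dotp h (et k))%:E)%E.
    by rewrite (bigD1 k) //= le_max lexx.
  have le2 : (\big[Order.max/-oo%E]_(k : S) (dotp h (es k))%:E <= (f j)%:E)%E.
    elim/big_ind: _ => //; first by rewrite leNye.
      by move=> x y a b; rewrite ge_max a b.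
    by move=> i _; rewrite lee_fin maxS.
  by rewrite -lee_fin (le_trans le1 (le_trans HM le2)).
have gST : is_greedy (sum_le rS rT) (fun k => dotp h (sum_emb es et k)) (inl j).
  apply/forallP => -[k|k] /=.
  - by move/forallP: gj => /(_ k).
  - by rewrite andbT orbC -le_eqVlt maxT.
rewrite /greedy.
have U1 : forall k, is_greedy (rank_le rS) (softmax es h) k -> k = j.
  by move=> k; rewrite softmax_greedyE => gk; apply: (greedy_uniq _ _ _ _ _ _ antiS gk gj).
have U2 : forall k, is_greedy (sum_le rS rT) (softmax (sum_emb es et) h) k -> k = inl j.
  by move=> k; rewrite softmax_greedyE => gk; apply: (greedy_uniq _ _ _ _ _ _ antiST gk gST).
rewrite (@pick_uniq _ _ j) //; last by rewrite softmax_greedyE.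
by rewrite (@pick_uniq _ _ (inl j)) //; rewrite softmax_greedyE.
Qed.
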